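(* Assume the Setting and consider Algorithm 1 with noisy data $y^\delta$ ($\|y^\delta-y\|\le\delta$, $\delta>0$), where $\tau>1$ and $\mu_0>0$ satisfy $c_0:=1-\frac{1+\eta}{\tau}-\eta-\frac{\mu_0}{4\sigma}>0$. Let $k\ge0$ be an integer such that $\|r_n^\delta\|>\tau\delta$ for all $0\le n<k$. Then $x_n^\delta\in B_{2\rho}(x_0)$ for all $0\le n\le k$, and for every solution $\hat x$ of $F(x)=y$ with $\hat x\in B_{2\rho}(x_0)\cap\mathrm{dom}(\mathcal R)$, setting $\Delta_n^\delta:=D_{\mathcal R}^{\xi_n^\delta}(\hat x,x_n^\delta)$, one has $\Delta_{n+1}^\delta\le\Delta_n^\delta-c_0\alpha_n^\delta\|r_n^\delta\|^2$ for all $0\le n<k$.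
   Context: Setting. Let $X,Y$ be real Hilbert spaces. Let $\mathcal R:X\to(-\infty,\infty]$ be proper, lower semicontinuous and strongly convex with constant $\sigma>0$, i.e. $\mathcal R(t\bar x+(1-t)x)+\sigma t(1-t)\|\bar x-x\|^2\le t\mathcal R(\bar x)+(1-t)\mathcal R(x)$ for all $\bar x,x\in\mathrm{dom}(\mathcal R)$ and $t\in[0,1]$. For $\xi\in\partial\mathcal R(x)$ (subdifferential) the Bregman distance is $D_{\mathcal R}^{\xi}(z,x)=\mathcal R(z)-\mathcal R(x)-\langle\xi,z-x\rangle$. The convex conjugate $\mathcal R^*$ is differentiable with $\|\nabla\mathcal R^*(\bar\xi)-\nabla\mathcal R^*(\xi)\|\le\|\bar\xi-\xi\|/(2\sigma)$, and $\nabla\mathcal R^*(\xi)=\arg\min_{x\in X}\{\mathcal R(x)-\langle\xi,x\rangle\}$ (unique minimizer), with $\xi\in\partial\mathcal R(\nabla\mathcal R^*(\xi))$. Let $F:\mathrm{dom}(F)\subset X\to Y$ and $y\in Y$. Assume: (b) there are $\rho>0$, $x_0\in X$, $\xi_0\in\partial\mathcal R(x_0)$ with $B_{2\rho}(x_0):=\{x:\|x-x_0\|\le 2\rho\}\subset\mathrm{dom}(F)$, and $F(x)=y$ has a solution $\bar x$ with $D_{\mathcal R}^{\xi_0}(\bar x,x_0)\le\sigma\rho^2$; (c) $F$ is weakly closed: if $x_n\in\mathrm{dom}(F)$, $x_n\rightharpoonup x$ and $F(x_n)\to v$, then $x\in\mathrm{dom}(F)$ and $F(x)=v$; (d) there are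 bounded linear operators $L(x):X\to Y$, $x\in B_{2\rho}(x_0)$, with $x\mapsto L(x)$ continuous on $B_{2\rho}(x_0)$, a constant $\eta\in[0,1)$ with $\|F(x)-F(\bar x)-L(\bar x)(x-\bar x)\|\le\eta\|F(x)-F(\bar x)\|$ for all $x,\bar x\in B_{2\rho}(x_0)$, and a constant $L>0$ with $\|L(x)\|\le L$ on $B_{2\rho}(x_0)$. Under these assumptions $F(x)=y$ has a unique solution $x^\dagger\in\mathrm{dom}(F)$ minimizing $D_{\mathcal R}^{\xi_0}(x,x_0)$ over all solutions; it satisfies $\|x^\dagger-x_0\|\le\rho$. Algorithm 1 (noisy data $y^\delta$ with $\|y^\delta-y\|\le\delta$, $\delta>0$). Parameters: $\tau>1$, $\beta\in(0,\infty]$, $\mu_0>0$, $\mu_1>0$, and a fixed choice of one of two step-size rules: (constant) $\alpha_n^\delta=\mu_0/L^2$, or (adaptive) $\alpha_n^\delta=\min\{\mu_0\|r_n^\delta\|^2/\|g_n^\delta\|^2,\mu_1\}$ (with $\mu_0\|r_n^\delta\|^2/\|g_n^\delta\|^2:=+\infty$ if $g_n^\delta=0$). Set $\xi_{-1}^\delta=\xi_0^\delta=\xi_0$, $x_0^\delta=x_0=\nabla\mathcal R^*(\xi_0)$. For $n\ge0$: (i) $r_n^\delta:=F(x_n^\delta)-y^\delta$; if $\|r_n^\delta\|\le\tau\delta$, stop and output $x_n^\delta$ (the stopping index is denoted $n_\delta$). (ii) $g_n^\delta:=L(x_n^\delta)^*r_n^\delta$ and $\alpha_n^\delta$ by the chosen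 rule. (iii) $m_n^\delta:=\xi_n^\delta-\xi_{n-1}^\delta$; $\tilde\gamma_0^\delta:=0$ and for $n\ge1$, $\tilde\gamma_n^\delta:=\langle m_n^\delta,x_n^\delta-x_{n-1}^\delta\rangle-(1-\eta)\alpha_{n-1}^\delta\|r_{n-1}^\delta\|^2+(1+\eta)\alpha_{n-1}^\delta\delta\|r_{n-1}^\delta\|+\beta_{n-1}^\delta\tilde\gamma_{n-1}^\delta$. (iv) $\beta_n^\delta:=\min\{\max\{0,(\alpha_n^\delta\langle g_n^\delta,m_n^\delta\rangle-2\sigma\tilde\gamma_n^\delta)/\|m_n^\delta\|^2\},\beta\}$ if $m_n^\delta\ne0$, and $\beta_n^\delta:=0$ if $m_n^\delta=0$. (v) $\xi_{n+1}^\delta:=\xi_n^\delta-\alpha_n^\delta g_n^\delta+\beta_n^\delta m_n^\delta$, $x_{n+1}^\delta:=\nabla\mathcal R^*(\xi_{n+1}^\delta)$. *)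

(* Defs.v *)
From HB Require Import structures.
From mathcomp Require Import all_boot all_order all_algebra.
From mathcomp Require Import all_classical all_reals all_analysis.
Set Implicit Arguments. Unset Strict Implicit. Unset Printing Implicit Defensive.
Import Order.TTheory GRing.Theory Num.Theory.
Import numFieldNormedType.Exports.
Local Open Scope classical_set_scope.
Local Open Scope ring_scope.

(* ip is an inner product on the normed space X inducing its norm.
   Together with X : completeNormedModType R this makes X a real Hilbert space. *)
Definition inner_product {R : realType} {X : normedModType R} (ip : X -> X -> R) :=
  [/\ (forall x y, ip x y = ip y x),
      (forall (a : R) x y z, ip (a *: x + y) z = a * ip x z + ip y z) &
      (forall x, ip x x = `|x| ^+ 2)].

Definition cball {R : realType} {X : normedModType R} (c : X) (r : R) : set X :=
  [set x | `|x - c| <= r].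

Section ConvexAnalysis.
Context {R : realType} {X : normedModType R} (ip : X -> X -> R) (Rf : X -> \bar R).
Local Open Scope ereal_scope.

Definition domR : set X := [set x | Rf x < +oo].

Definition proper_fun : Prop := (exists x, Rf x < +oo) /\ (forall x, -oo < Rf x).

Definition strongly_convex (sigma : R) : Prop :=
  forall (xb x : X) (t : R), domR xb -> domR x -> (0 <= t <= 1)%R ->
    Rf (t *: xb + (1 - t) *: x)%R + (sigma * t * (1 - t) * `|(xb - x)%R| ^+ 2)%:E
    <= t%:E * Rf xb + (1 - t)%:E * Rf x.

Definition subdiff (x xi : X) : Prop :=
  Rf x \is a fin_num /\ forall z, Rf x + (ip xi (z - x)%R)%:E <= Rf z.

Definition bregman (xi z x : X) : \bar R := Rf z - Rf x - (ip xi (z - x)%R)%:E.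

(* g xi is a minimizer of x |-> Rf x - <xi, x> for every xi
   (this characterizes grad R^* xi = argmin, the minimizer being unique) *)
Definition is_grad_conj (g : X -> X) : Prop :=
  forall xi z, Rf (g xi) - (ip xi (g xi))%:E <= Rf z - (ip xi z)%:E.

End ConvexAnalysis.

Inductive step_rule := ConstantStep | AdaptiveStep.

Record alg_state {X : Type} {R : Type} := AlgState
  { st_x : X ; st_xi : X ; st_xip : X ; st_gam : R }.

Section Algorithm1.
Context {R : realType} {X Y : normedModType R}.
Variables (ipX : X -> X -> R) (gradRs : X -> X) (F : X -> Y) (Lstar : X -> Y -> X)
  (Lc eta sigma : R) (beta : \bar R) (mu0 mu1 : R) (rule : step_rule)
  (delta : R) (ydelta : Y) (x0 xi0 : X).

Definition alg_alpha (r : Y) (g : X) : R :=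
  match rule with
  | ConstantStep => mu0 / Lc ^+ 2
  | AdaptiveStep => if g == 0 then mu1
                    else Num.min (mu0 * `|r| ^+ 2 / `|g| ^+ 2) mu1
  end.

Definition alg_beta (a : R) (g m : X) (gam : R) : R :=
  if m == 0 then 0 else
  let q := Num.max 0 ((a * ipX g m - 2 * sigma * gam) / `|m| ^+ 2) in
  match beta with
  | EFin b => Num.min q b
  | _ => q   (* beta = +oo *)
  end.

(* one iteration: state n = (x_n, xi_n, xi_{n-1}, gamma~_n) *)
Definition alg_step (s : @alg_state X R) : @alg_state X R :=
  let x := st_x s in
  let xi := st_xi s in
  let r := F x - ydelta in
  let g := Lstar x r in
  let a := alg_alpha r g in
  let m := xi - st_xip s in
  let b := alg_beta a g m (st_gam s) in
  let xi' := xi - a *: g + b *: m in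
  let x' := gradRs xi' in
  let gam' := ipX (xi' - xi) (x' - x) - (1 - eta) * a * `|r| ^+ 2
              + (1 + eta) * a * delta * `|r| + b * st_gam s in
  AlgState x' xi' xi gam'.

(* the (non-stopped) iteration of Algorithm 1 *)
Fixpoint alg_iter (n : nat) : @alg_state X R :=
  match n with
  | 0 => AlgState x0 xi0 xi0 0
  | n'.+1 => alg_step (alg_iter n')
  end.

Definition alg_x n := st_x (alg_iter n).
Definition alg_xi n := st_xi (alg_iter n).
Definition alg_r n := F (alg_x n) - ydelta.
Definition alg_alpha_n n := alg_alpha (alg_r n) (Lstar (alg_x n) (alg_r n)).

End Algorithm1.

(* Main.v *)
Require Import Defs.
From HB Require Import structures.
From mathcomp Require Import all_boot all_order all_algebra.
From mathcomp Require Import all_classical all_reals all_analysis.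
From mathcomp Require Import ring lra.
Import Order.TTheory GRing.Theory Num.Theory.
Import numFieldNormedType.Exports.
Local Open Scope classical_set_scope.
Local Open Scope ring_scope.

Section IP.
Context {R : realType} {X : normedModType R} (ip : X -> X -> R)
  (hip : inner_product ip).

Lemma ipC x y : ip x y = ip y x. Proof. by case: hip. Qed.
Lemma ipxx x : ip x x = `|x| ^+ 2. Proof. by case: hip. Qed.
Lemma ipL a x y z : ip (a *: x + y) z = a * ip x z + ip y z.
Proof. by case: hip. Qed.
Lemma ipDl x y z : ip (x + y) z = ip x z + ip y z.
Proof. by rewrite -[x in LHS]scale1r ipL mul1r. Qed.
Lemma ip0l z : ip 0 z = 0.
Proof. have := ipDl 0 0 z; rewrite addr0 => h; lra. Qed.
Lemma ipZl a x z : ip (a *: x) z = a * ip x z.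
Proof. by rewrite -[a *: x]addr0 ipL ip0l addr0. Qed.
Lemma ipNl x z : ip (- x) z = - ip x z.
Proof. by rewrite -scaleN1r ipZl mulN1r. Qed.
Lemma ipBl x y z : ip (x - y) z = ip x z - ip y z.
Proof. by rewrite ipDl ipNl. Qed.
Lemma ipDr x y z : ip z (x + y) = ip z x + ip z y.
Proof. by rewrite ipC ipDl !(ipC _ z). Qed.
Lemma ipZr a x z : ip z (a *: x) = a * ip z x.
Proof. by rewrite ipC ipZl ipC. Qed.
Lemma ipNr x z : ip z (- x) = - ip z x.
Proof. by rewrite ipC ipNl ipC. Qed.
Lemma ipBr x y z : ip z (x - y) = ip z x - ip z y.
Proof. by rewrite ipDr ipNr. Qed.
Lemma ip0r z : ip z 0 = 0.
Proof. by rewrite ipC ip0l. Qed.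

Lemma normB2 x y : `|x - y| ^+ 2 = `|x| ^+ 2 - 2 * ip x y + `|y| ^+ 2.
Proof.
rewrite -!ipxx ipBl !ipBr (ipC y x); ring.
Qed.

Lemma normD2 x y : `|x + y| ^+ 2 = `|x| ^+ 2 + 2 * ip x y + `|y| ^+ 2.
Proof.
rewrite -!ipxx ipDl !ipDr (ipC y x); ring.
Qed.

Lemma ip_CS x y : ip x y <= `|x| * `|y|.
Proof.
have [x0|xn0] := eqVneq x 0; first by rewrite x0 ip0l normr0 mul0r.
have [y0|yn0] := eqVneq y 0; first by rewrite y0 ip0r normr0 mulr0.
have nx : 0 < `|x| by rewrite normr_gt0.
have ny : 0 < `|y| by rewrite normr_gt0.
have h := normB2 (`|y| *: x) (`|x| *: y).
rewrite !normrZ !ger0_norm ?normr_ge0 // ipZl ipZr in h.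
have h0 : 0 <= `| (`|y| *: x - `|x| *: y) | ^+ 2 by rewrite exprn_ge0.
rewrite h in h0.
have hp : 0 < `|x| * `|y| by rewrite mulr_gt0.
nra.
Qed.

Lemma ip_CSN x y : - (`|x| * `|y|) <= ip x y.
Proof. have := ip_CS (- x) y; rewrite ipNl normrN; lra. Qed.

End IP.
Section Convex.
Context {R : realType} {X : normedModType R} (ip : X -> X -> R)
  (hip : inner_product ip) (Rf : X -> \bar R) (hprop : proper_fun Rf).

Lemma fin_dom {x} : domR Rf x -> Rf x \is a fin_num.
Proof. move=> hx; rewrite fin_numElt; case: hprop => _ ->; exact: hx. Qed.

Definition fR x := fine (Rf x).

Lemma fRE {x} : domR Rf x -> Rf x = (fR x)%:E.
Proof. by move=> /fin_dom h; rewrite /fR fineK. Qed.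

Lemma subdiff_dom {x xi} : subdiff ip Rf x xi -> domR Rf x.
Proof. by case=> h _; rewrite /domR /=; move: h; rewrite fin_numElt => /andP[]. Qed.

Lemma subdiff_real x xi z : subdiff ip Rf x xi -> domR Rf z ->
  fR x + ip xi (z - x) <= fR z.
Proof.
move=> hs hz; have hx := subdiff_dom hs; case: hs => _ /(_ z).
by rewrite (fRE hx) (fRE hz) -EFinD lee_fin.
Qed.

Lemma bregmanE xi z x : domR Rf z -> domR Rf x ->
  bregman ip Rf xi z x = (fR z - fR x - ip xi (z - x))%:E.
Proof. by move=> hz hx; rewrite /bregman (fRE hz) (fRE hx) !EFinB. Qed.

Lemma breg_ge sigma x xi z : strongly_convex Rf sigma -> 0 < sigma ->
  subdiff ip Rf x xi -> domR Rf z ->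
  sigma * `|z - x| ^+ 2 <= fR z - fR x - ip xi (z - x).
Proof.
move=> hsc hs hsd hz; have hx := subdiff_dom hsd.
set D := fR z - fR x - ip xi (z - x).
have hkey : forall t, 0 < t <= 1 -> sigma * (1 - t) * `|z - x| ^+ 2 <= D.
  move=> t /andP[t0 t1].
  have := hsc z x t hz hx; rewrite t1 ltW //= => /(_ isT) hc.
  set w := t *: z + (1 - t) *: x in hc.
  have wx : w - x = t *: (z - x).
    by rewrite /w scalerBl scale1r scalerBr addrCA addrAC subrr add0r.
  case: hsd => _ /(_ w) hsw.
   rewrite wx in hsw. rewrite (ipZr ip hip) in hsw.  rewrite (fRE hx) in hsw.
  rewrite (fRE hz) (fRE hx) in hc.
  have h1 := leeD2r (sigma * t * (1 - t) * `|z - x| ^+ 2)%:E hsw.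
  have h2 := le_trans h1 hc.
  rewrite -!EFinM -!EFinD lee_fin in h2.
  have h3 : t * (sigma * (1 - t) * `|z - x| ^+ 2) <= t * D.
    rewrite /D; nra.
  by rewrite -(ler_pM2l t0).

have D0 : 0 <= D.
  have := hkey 1; rewrite ltr01 lexx subrr mulr0 mul0r => /(_ isT); done.
rewrite leNgt; apply/negP => hlt.
set A := sigma * `|z - x| ^+ 2 in hlt.
have A0 : 0 < A by exact: (le_lt_trans D0 hlt).
set t := (A - D) / (2 * A).
have tA : t * A = (A - D) / 2 by rewrite /t; field; rewrite gt_eqF.
have t0 : 0 < t by rewrite /t divr_gt0 // ?subr_gt0 // mulr_gt0.
have t1 : t <= 1.
  rewrite /t ler_pdivrMr; lra.
have := hkey t; rewrite t0 t1 => /(_ isT).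
have -> : sigma * (1 - t) * `|z - x| ^+ 2 = A - t * A by rewrite /A; ring.
rewrite tA; lra.
Qed.

Lemma grad_subdiff (g : X -> X) xi : is_grad_conj ip Rf g -> subdiff ip Rf (g xi) xi.
Proof.
move=> hg; case: (hprop) => [[x1 hx1] hninf].
have hdom : domR Rf (g xi).
  have := hg xi x1; rewrite /domR /= (fRE hx1) -EFinB.
  case E: (Rf (g xi)) => [r| |] //; have := hninf (g xi); by rewrite E.
split; first exact: fin_dom.
move=> z; have := hg xi z; have := hninf z.
case: (Rf z) => [r| |] _ //.
2: by move=> _; rewrite leey.
rewrite (fRE hdom) -!EFinB -EFinD !lee_fin (ipBr ip hip) => h; lra.
Qed.
End Convex.

Lemma sq_le {R : realType} (s d p : R) : 0 < s -> 0 < p -> 0 <= d ->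
  s * d ^+ 2 <= s * p ^+ 2 -> d <= p.
Proof.
move=> hs hp hd h; rewrite ler_pM2l // in h.
rewrite leNgt; apply/negP => hlt.
have : p * p < d * d by apply: ltr_pM => //; exact: ltW.
rewrite -!expr2; lra.
Qed.

Lemma lin_opp {R : realType} {X Y : normedModType R} (f : X -> Y) :
  linear f -> forall u, f (- u) = - f u.
Proof.
move=> hf u.
have h0 : f 0 = 0.
  have := hf 1 0 0; rewrite !scale1r !addr0 => h.
  by apply: (addrI (f 0)); rewrite -h addr0.
by have := hf (-1) u 0; rewrite !addr0 h0 addr0 !scaleN1r.
Qed.

Section Step.
Context {R : realType} {X Y : normedModType R} (ipX : X -> X -> R) (ipY : Y -> Y -> R)
  (hX : inner_product ipX) (hY : inner_product ipY)
  (Rf : X -> \bar R) (hprop : proper_fun Rf) (sigma : R) (hsigma : 0 < sigma)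
  (hsc : strongly_convex Rf sigma) (gradRs : X -> X) (hgrad : is_grad_conj ipX Rf gradRs)
  (F : X -> Y) (y : Y) (B : set X) (L : X -> X -> Y) (eta Lc : R)
  (hLlin : forall x, B x -> linear (L x)) (heta : 0 <= eta < 1)
  (htcc : forall x xb, B x -> B xb -> `|F x - F xb - L xb (x - xb)| <= eta * `|F x - F xb|)
  (hLc : 0 < Lc) (hLbd : forall x, B x -> forall h, `|L x h| <= Lc * `|h|)
  (Lstar : X -> Y -> X)
  (hLstar : forall x, B x -> forall v h, ipX (Lstar x v) h = ipY v (L x h))
  (tau : R) (beta : \bar R) (mu0 mu1 : R) (rule : step_rule)
  (htau : 1 < tau) (hbeta : (0 < beta)%E) (hmu0 : 0 < mu0) (hmu1 : 0 < mu1)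
  (delta : R) (ydelta : Y) (hdelta : 0 < delta) (hnoise : `|ydelta - y| <= delta).

Lemma g_bound x (r : Y) : B x -> `|Lstar x r| <= Lc * `|r|.
Proof.
move=> hx; set g := Lstar x r.
have h1 : `|g| ^+ 2 <= `|r| * (Lc * `|g|).
  rewrite -(ipxx _ hX) /g hLstar //.
  apply: le_trans (ip_CS _ hY _ _) _.
  by rewrite ler_wpM2l ?normr_ge0 ?hLbd.
have hG := normr_ge0 g; have hr := normr_ge0 r.
have hLr : 0 <= Lc * `|r| by rewrite mulr_ge0 // ltW.
rewrite leNgt; apply/negP => hlt.
have hGp : 0 < `|g| by exact: le_lt_trans hLr hlt.
have : Lc * `|r| * `|g| < `|g| * `|g| by rewrite ltr_pM2r.
rewrite -expr2; lra.
Qed.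

Lemma alpha_props (r : Y) (g : X) : `|g| <= Lc * `|r| ->
  0 <= alg_alpha Lc mu0 mu1 rule r g /\
  alg_alpha Lc mu0 mu1 rule r g * `|g| ^+ 2 <= mu0 * `|r| ^+ 2.
Proof.
move=> hg; rewrite /alg_alpha; case: rule.
  have hL2 : 0 < Lc ^+ 2 by rewrite exprn_gt0.
  split; first by rewrite divr_ge0 // ltW.
  have hg2 : `|g| ^+ 2 <= Lc ^+ 2 * `|r| ^+ 2.
    by rewrite -exprMn lerXn2r ?nnegrE ?normr_ge0 ?mulr_ge0 ?normr_ge0 // ltW.
  rewrite mulrAC ler_pdivrMr // -mulrA; apply: ler_wpM2l; [exact: ltW|].
  by rewrite mulrC.
case: eqP => [->|/eqP gn0].
  by rewrite normr0 expr0n /= mulr0; split; [exact: ltW|rewrite mulr_ge0 ?sqr_ge0 // ltW].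
have g2 : 0 < `|g| ^+ 2 by rewrite exprn_gt0 // normr_gt0.
split.
  rewrite le_min; apply/andP; split; last exact: ltW.
  by rewrite divr_ge0 ?mulr_ge0 ?sqr_ge0 // ?ltW.
by rewrite -ler_pdivlMr // ge_min lexx.
Qed.

Lemma beta_props a (g m : X) gam :
  let b := alg_beta ipX sigma beta a g m gam in
  0 <= b /\ b ^+ 2 * `|m| ^+ 2 <= b * (a * ipX g m - 2 * sigma * gam).
Proof.
rewrite /alg_beta; case: eqP => [_|/eqP mn0] /=.
  by rewrite expr0n /= !mul0r; split.
have m2 : 0 < `|m| ^+ 2 by rewrite exprn_gt0 // normr_gt0.
set K := a * ipX g m - 2 * sigma * gam.
set p := Num.max 0 (K / `|m| ^+ 2).
have p0 : 0 <= p by rewrite le_max lexx.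
suff: forall b, 0 <= b <= p -> 0 <= b /\ b ^+ 2 * `|m| ^+ 2 <= b * K.
  move=> H; apply: H; case: beta hbeta => [bb| |] //= hb.
  - rewrite le_min p0 ge_min lexx /= ?andbT; rewrite lte_fin in hb; exact: ltW.
  - by rewrite p0 lexx.
move=> b /andP[b0 bp]; split => //.
have [->|bpos] := eqVneq b 0; first by rewrite expr0n /= !mul0r.
have bgt : 0 < b by rewrite lt_def bpos b0.
have pq : p = K / `|m| ^+ 2.
  move: bp; rewrite /p; case: (leP 0 (K / `|m| ^+ 2)) => h //.
  by move=> h2; move: bgt; rewrite ltNge h2.
rewrite pq ler_pdivlMr // in bp.
rewrite expr2 -mulrA ler_wpM2l //.
Qed.

Lemma P_bound x xh : B x -> B xh -> F xh = y ->
  (1 - eta) * `|F x - ydelta| ^+ 2 - (1 + eta) * delta * `|F x - ydelta|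
  <= ipX (Lstar x (F x - ydelta)) (x - xh).
Proof.
move=> hx hxh hFy; set r := F x - ydelta.
rewrite hLstar //.
have hlin := hLlin x hx.
have e1 : L x (x - xh) = - L x (xh - x) by rewrite -lin_opp // opprB.
have he : `|F xh - F x - L x (xh - x)| <= eta * `|F xh - F x| := htcc xh x hxh hx.
set e := F xh - F x - L x (xh - x) in he.
have e2 : L x (xh - x) = (y - F x) - e.
  by rewrite /e hFy opprB addrCA subrr addr0.
have e3 : y - F x = - (r + (ydelta - y)) by rewrite /r addrA subrK opprB.
rewrite e1 e2 (ipNr _ hY) (ipBr _ hY) e3 (ipNr _ hY) (ipDr _ hY) (ipxx _ hY).
set A := `|r|.
have hA : 0 <= A by rewrite normr_ge0.
have hN : `|F xh - F x| <= A + delta.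
  rewrite hFy e3 normrN; apply: le_trans (ler_normD _ _) _; apply: lerD; [exact: lexx | exact: hnoise].
have h1 := ip_CSN _ hY r (ydelta - y).
have h1' : A * `|ydelta - y| <= A * delta by rewrite ler_wpM2l.
have h2 := ip_CSN _ hY r e.
have h2' : A * `|e| <= A * (eta * `|F xh - F x|) by rewrite ler_wpM2l.
have h2'' : A * (eta * `|F xh - F x|) <= A * (eta * (A + delta)).
  by rewrite ler_wpM2l // ler_wpM2l // ; case/andP: heta.
rewrite -/A in h1 h2; lra.
Qed.

Definition brg xi z x := fR Rf z - fR Rf x - ipX xi (z - x).

Lemma step_main (s : @alg_state X R) xh :
  B (st_x s) -> subdiff ipX Rf (st_x s) (st_xi s) ->
  ipX (st_xi s - st_xip s) (st_x s - xh) <= st_gam s ->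
  F xh = y -> B xh -> domR Rf xh ->
  let s' := alg_step ipX gradRs F Lstar Lc eta sigma beta mu0 mu1 rule delta ydelta s in
  let r := F (st_x s) - ydelta in
  let a := alg_alpha Lc mu0 mu1 rule r (Lstar (st_x s) r) in
  ipX (st_xi s' - st_xip s') (st_x s' - xh) <= st_gam s' /\
  (tau * delta < `|r| ->
   brg (st_xi s') xh (st_x s') <= brg (st_xi s) xh (st_x s)
     - (1 - (1 + eta) / tau - eta - mu0 / (4 * sigma)) * a * `|r| ^+ 2).
Proof.
case: s => x xi xip gam /= hx hsd hinv hFy hBh hdh.
rewrite /alg_step /=.
set r := F x - ydelta. set g := Lstar x r.
set a := alg_alpha Lc mu0 mu1 rule r g. set m := xi - xip.
set b := alg_beta ipX sigma beta a g m gam.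
set xi' := xi - a *: g + b *: m. set x' := gradRs xi'.
have hg := g_bound x r hx.
have [ha0 ha] := alpha_props r g hg; rewrite -/a in ha0 ha.
have [hb0 hb] := beta_props a g m gam; rewrite -/b in hb0 hb.
have hP : (1 - eta) * `|r| ^+ 2 - (1 + eta) * delta * `|r| <= ipX g (x - xh)
  := P_bound x xh hx hBh hFy.
have dxi : xi' - xi = b *: m - a *: g.
  by rewrite /xi' [xi - _]addrC -!addrA (addrCA xi) subrr addr0 addrC.
have hQ : ipX (xi' - xi) (x - xh) = b * ipX m (x - xh) - a * ipX g (x - xh).
  by rewrite dxi (ipBl _ hX) !(ipZl _ hX).
have E5 : b * ipX m (x - xh) <= b * gam by rewrite ler_wpM2l.
have E4 : a * ((1 - eta) * `|r| ^+ 2 - (1 + eta) * delta * `|r|) <= a * ipX g (x - xh).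
  by rewrite ler_wpM2l.
split.
  have ex : x' - xh = (x' - x) + (x - xh) by rewrite addrA subrK.
  rewrite ex (ipDr _ hX) hQ; lra.
move=> hr.
have hxd := subdiff_dom _ _ hsd.
have hsd' : subdiff ipX Rf x' xi' := grad_subdiff _ hX _ hprop gradRs xi' hgrad.
have hx'd := subdiff_dom _ _ hsd'.
have D2 := breg_ge _ hX _ hprop sigma x xi x' hsc hsigma hsd hx'd.
set D1 := fR Rf x - fR Rf x' - ipX xi' (x - x').
have I1 : brg xi' xh x' - brg xi xh x = D1 + ipX (xi' - xi) (x - xh).
  rewrite /brg /D1 !(ipBr _ hX) !(ipBl _ hX); lra.
have I2 : D1 + (fR Rf x' - fR Rf x - ipX xi (x' - x)) = ipX (xi' - xi) (x' - x).
  rewrite /D1 !(ipBr _ hX) !(ipBl _ hX); lra.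
have hs0 : 0 <= 2 * sigma by rewrite mulr_ge0 // ltW.
have CS0 : 0 <= `|(xi' - xi) - (2 * sigma) *: (x' - x)| ^+ 2 by rewrite exprn_ge0.
rewrite (normB2 _ hX) (ipZr _ hX) normrZ (ger0_norm hs0) in CS0.
have nxi : `|xi' - xi| ^+ 2 = b ^+ 2 * `|m| ^+ 2 - 2 * (a * b) * ipX m g + a ^+ 2 * `|g| ^+ 2.
  rewrite dxi (normB2 _ hX) (ipZl _ hX) (ipZr _ hX) !normrZ (ger0_norm hb0) (ger0_norm ha0).
  by rewrite !exprMn -/a; ring.
have hS : ipX g m = ipX m g by rewrite (ipC _ hX).
rewrite hS in hb.
have h4 : 0 < 4 * sigma by rewrite mulr_gt0.
have D2' := ler_wpM2l (ltW h4) D2.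
have E1 : (4 * sigma) * D1 <= `|xi' - xi| ^+ 2.
  have : (4 * sigma) * D1 = 4 * sigma * ipX (xi' - xi) (x' - x)
     - 4 * sigma * (fR Rf x' - fR Rf x - ipX xi (x' - x)).
    rewrite -I2; ring.
  move=> ->.
  move: D2' CS0; set P := ipX (xi' - xi) (x' - x); set N := `|x' - x|.
  move=> D2' CS0; nra.
have E5' := ler_wpM2l (ltW h4) E5.
have E3 := ler_wpM2l ha0 ha.
have bM : 0 <= b ^+ 2 * `|m| ^+ 2 by rewrite mulr_ge0 ?sqr_ge0.
have Hu : D1 + b * ipX m (x - xh) <= a * (mu0 * `|r| ^+ 2) / (4 * sigma).
  rewrite ler_pdivlMr; last by rewrite mulr_gt0.
  rewrite nxi in E1; lra.
have hd : delta <= `|r| / tau.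
  rewrite ler_pdivlMr; last exact: (lt_trans ltr01 htau).
  by rewrite mulrC; exact: ltW.
have E6 : a * ((1 + eta) * `|r|) * delta <= a * ((1 + eta) * `|r|) * (`|r| / tau).
  rewrite ler_wpM2l // mulr_ge0 // mulr_ge0 ?normr_ge0 //; case/andP: heta => h _; lra.
have := I1; rewrite hQ => I1'.
lra.
Qed.

Lemma final (domF : set X) (x0 xi0 : X) (rho : R) (k : nat) (hrho : 0 < rho)
  (hBeq : B = cball x0 (2 * rho)) (hxi0 : subdiff ipX Rf x0 xi0)
  (hsol : exists2 xb, domF xb /\ F xb = y &
            (bregman ipX Rf xi0 xb x0 <= (sigma * rho ^+ 2)%:E)%E)
  (hc0 : 0 < 1 - (1 + eta) / tau - eta - mu0 / (4 * sigma))
  (hk : forall n, (n < k)%N ->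
      tau * delta < `|alg_r ipX gradRs F Lstar Lc eta sigma beta mu0 mu1 rule delta ydelta x0 xi0 n|) :
  let xn := alg_x ipX gradRs F Lstar Lc eta sigma beta mu0 mu1 rule delta ydelta x0 xi0 in
  let xin := alg_xi ipX gradRs F Lstar Lc eta sigma beta mu0 mu1 rule delta ydelta x0 xi0 in
  let rn := alg_r ipX gradRs F Lstar Lc eta sigma beta mu0 mu1 rule delta ydelta x0 xi0 in
  let an := alg_alpha_n ipX gradRs F Lstar Lc eta sigma beta mu0 mu1 rule delta ydelta x0 xi0 in
  let c0 := 1 - (1 + eta) / tau - eta - mu0 / (4 * sigma) in
  (forall n, (n <= k)%N -> cball x0 (2 * rho) (xn n)) /\
  (forall xh, F xh = y -> cball x0 (2 * rho) xh -> domR Rf xh ->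
     forall n, (n < k)%N ->
       (bregman ipX Rf (xin n.+1) xh (xn n.+1)
        <= bregman ipX Rf (xin n) xh (xn n) - (c0 * an n * `|rn n| ^+ 2)%:E)%E).
Proof.
move=> xn xin rn an c0.
rewrite -hBeq.
pose S := alg_iter ipX gradRs F Lstar Lc eta sigma beta mu0 mu1 rule delta ydelta x0 xi0.
have subd : forall n, subdiff ipX Rf (xn n) (xin n).
  case=> [|n] //; exact: (grad_subdiff _ hX _ hprop gradRs _ hgrad).
have INV : forall xh, F xh = y -> B xh -> domR Rf xh -> forall n,
    (forall j, (j < n)%N -> B (xn j)) ->
    ipX (st_xi (S n) - st_xip (S n)) (st_x (S n) - xh) <= st_gam (S n).
  move=> xh hFy hBh hdh; elim=> [|n IH] hB.
    by rewrite /= subrr (ip0l _ hX).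
  have hBn : B (st_x (S n)) by exact: (hB n).
  have := step_main (S n) xh hBn (subd n) (IH (fun j hj => hB j (ltnW hj))) hFy hBh hdh.
  by case.
have DEC : forall xh, F xh = y -> B xh -> domR Rf xh -> forall n,
    (forall j, (j <= n)%N -> B (xn j)) -> (n < k)%N ->
    brg (xin n.+1) xh (xn n.+1) <= brg (xin n) xh (xn n) - c0 * an n * `|rn n| ^+ 2.
  move=> xh hFy hBh hdh n hB hnk.
  have hBn : B (st_x (S n)) by exact: (hB n).
  have := step_main (S n) xh hBn (subd n) (INV xh hFy hBh hdh n (fun j hj => hB j (ltnW hj))) hFy hBh hdh.
  case=> _ /(_ (hk n hnk)); done.
have A0 : forall n, B (xn n) -> 0 <= an n.
  move=> n hBn; exact: (alpha_props _ _ (g_bound _ _ hBn)).1.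
have hx0d := subdiff_dom _ _ hxi0.
case: hsol => xb [_ hFxb] hbr.
have hxbd : domR Rf xb.
  move: hbr; rewrite /bregman (fRE _ hprop hx0d) /domR /=.
  case E: (Rf xb) => [r| |].
  - by move=> _; rewrite ltry.
  - by rewrite !addye // leNgt => /negP; rewrite ltey.
  - by have := proj2 hprop xb; rewrite E.
have hbr0 : brg xi0 xb x0 <= sigma * rho ^+ 2.
  by move: hbr; rewrite (bregmanE _ _ hprop) // lee_fin.
have hxb0 := breg_ge _ hX _ hprop sigma x0 xi0 xb hsc hsigma hxi0 hxbd.
have dist_le : forall z, sigma * `|xb - z| ^+ 2 <= sigma * rho ^+ 2 -> `|z - xb| <= rho.
  move=> z hz; rewrite -(distrC xb z).
  exact: (sq_le _ _ _ hsigma hrho (normr_ge0 _) hz).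
have hxb : `|xb - x0| <= rho.
  rewrite -(distrC x0 xb); apply: dist_le; exact: le_trans hxb0 hbr0.
have hxbB : B xb.
  rewrite hBeq /cball /=; apply: le_trans hxb _.
  have -> : 2 * rho = rho + rho by ring.
  by rewrite lerDl ltW.
have BALL : forall n, (n <= k)%N -> forall j, (j <= n)%N -> B (xn j).
  elim=> [|n IH] hn j hj.
    rewrite leqn0 in hj; rewrite (eqP hj) hBeq /cball /=.
    by rewrite subrr normr0 mulr_ge0 // ltW.
  have IH' := IH (ltnW hn).
  rewrite leq_eqVlt in hj; case/orP: hj => [/eqP ->|hj]; last exact: IH'.
  have mono : forall m, (m <= n.+1)%N -> brg (xin m) xb (xn m) <= brg xi0 xb x0.
    elim=> [|m IHm] hm; first by [].
    apply: le_trans (IHm (ltnW hm)).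
    have hm' : (m <= n)%N by [].
    have hBm : forall j, (j <= m)%N -> B (xn j) := fun j hj => IH' j (leq_trans hj hm').
    have := DEC xb hFxb hxbB hxbd m hBm (leq_trans hm hn).
    have : 0 <= c0 * an m * `|rn m| ^+ 2.
      by rewrite mulr_ge0 ?sqr_ge0 // mulr_ge0 ?(A0 m (hBm m (leqnn m))) // ltW.
    move=> h1 h2; apply: le_trans h2 _; rewrite lerBlDr lerDl; exact: h1.
  have h1 := mono n.+1 (leqnn _).
  have h2 := breg_ge _ hX _ hprop sigma _ _ xb hsc hsigma (subd n.+1) hxbd.
  have h3 : `|xn n.+1 - xb| <= rho.
    apply: dist_le; apply: le_trans h2 _; apply: le_trans h1 hbr0.
  rewrite hBeq /cball /=.
  have -> : 2 * rho = rho + rho by ring.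
  apply: le_trans (ler_distD xb _ _) _; exact: lerD.
split; first by move=> n hn; exact: (BALL n hn n (leqnn n)).
move=> xh hFy hBh hdh n hnk.
have hB : forall j, (j <= n)%N -> B (xn j) := BALL n (ltnW hnk).
have := DEC xh hFy hBh hdh n hB hnk.
rewrite /brg => h.
have dn := subdiff_dom _ _ (subd n); have dn1 := subdiff_dom _ _ (subd n.+1).
by rewrite !(bregmanE _ _ hprop) // -EFinB lee_fin.
Qed.
End Step.

Theorem mainTheorem2
  (R : realType) (X Y : completeNormedModType R)
  (ipX : X -> X -> R) (ipY : Y -> Y -> R)
  (hX : inner_product ipX) (hY : inner_product ipY)
  (* the penalty functional and grad R^* *)
  (Rf : X -> \bar R) (sigma : R) (gradRs : X -> X)
  (hsigma : 0 < sigma) (hprop : proper_fun Rf)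
  (hlsc : lower_semicontinuous Rf) (hsc : strongly_convex Rf sigma)
  (hgrad : is_grad_conj ipX Rf gradRs)
  (* the forward operator *)
  (domF : set X) (F : X -> Y) (y : Y)
  (* assumption (b) *)
  (rho : R) (x0 xi0 : X) (hrho : 0 < rho) (hxi0 : subdiff ipX Rf x0 xi0)
  (hball : cball x0 (2 * rho) `<=` domF)
  (hsol : exists2 xb, domF xb /\ F xb = y &
            (bregman ipX Rf xi0 xb x0 <= (sigma * rho ^+ 2)%:E)%E)
  (* assumption (c): weak closedness *)
  (hwc : forall (xs : nat -> X) (x : X) (v : Y),
      (forall n, domF (xs n)) ->
      (forall z, ipX (xs n) z @[n --> \oo] --> ipX x z) ->
      F (xs n) @[n --> \oo] --> v ->
      domF x /\ F x = v)
  (* assumption (d) *)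
  (L : X -> X -> Y) (eta Lc : R)
  (hLlin : forall x, cball x0 (2 * rho) x -> linear (L x))
  (hLcont : forall x, cball x0 (2 * rho) x -> forall e : R, 0 < e ->
      exists2 d : R, 0 < d & forall x', cball x0 (2 * rho) x' -> `|x' - x| < d ->
        forall h, `|L x' h - L x h| <= e * `|h|)
  (heta : 0 <= eta < 1)
  (htcc : forall x xb, cball x0 (2 * rho) x -> cball x0 (2 * rho) xb ->
      `|F x - F xb - L xb (x - xb)| <= eta * `|F x - F xb|)
  (hLc : 0 < Lc)
  (hLbd : forall x, cball x0 (2 * rho) x -> forall h, `|L x h| <= Lc * `|h|)
  (* adjoints L(x)^* *)
  (Lstar : X -> Y -> X)
  (hLstar : forall x, cball x0 (2 * rho) x ->
      forall v h, ipX (Lstar x v) h = ipY v (L x h))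
  (* parameters and data of Algorithm 1 *)
  (tau : R) (beta : \bar R) (mu0 mu1 : R) (rule : step_rule)
  (htau : 1 < tau) (hbeta : (0 < beta)%E) (hmu0 : 0 < mu0) (hmu1 : 0 < mu1)
  (delta : R) (ydelta : Y) (hdelta : 0 < delta) (hnoise : `|ydelta - y| <= delta)
  (hc0 : 0 < 1 - (1 + eta) / tau - eta - mu0 / (4 * sigma))
  (k : nat)
  (hk : forall n, (n < k)%N ->
      tau * delta < `|alg_r ipX gradRs F Lstar Lc eta sigma beta mu0 mu1 rule delta ydelta x0 xi0 n|) :
  let xn := alg_x ipX gradRs F Lstar Lc eta sigma beta mu0 mu1 rule delta ydelta x0 xi0 in
  let xin := alg_xi ipX gradRs F Lstar Lc eta sigma beta mu0 mu1 rule delta ydelta x0 xi0 in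
  let rn := alg_r ipX gradRs F Lstar Lc eta sigma beta mu0 mu1 rule delta ydelta x0 xi0 in
  let an := alg_alpha_n ipX gradRs F Lstar Lc eta sigma beta mu0 mu1 rule delta ydelta x0 xi0 in
  let c0 := 1 - (1 + eta) / tau - eta - mu0 / (4 * sigma) in
  (forall n, (n <= k)%N -> cball x0 (2 * rho) (xn n)) /\
  (forall xh, F xh = y -> cball x0 (2 * rho) xh -> domR Rf xh ->
     forall n, (n < k)%N ->
       (bregman ipX Rf (xin n.+1) xh (xn n.+1)
        <= bregman ipX Rf (xin n) xh (xn n) - (c0 * an n * `|rn n| ^+ 2)%:E)%E).
Proof.
exact: (@final R X Y ipX ipY hX hY Rf hprop sigma hsigma hsc gradRs hgrad F y
  (cball x0 (2 * rho)) L eta Lc hLlin heta htcc hLc hLbd Lstar hLstar tau beta mu0 mu1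
  rule htau hbeta hmu0 hmu1 delta ydelta hnoise domF x0 xi0 rho k hrho erefl hxi0
  hsol hc0 hk).
Qed.
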